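(* Let $n,k$ be integers with $2\le k\le n$, and let $M\in\mathcal{S}^{n,k}$ have smallest eigenvalue $-\lambda_1<0$. Then $$\mathrm{dist}_F(M,\mathcal{S}^n_+)\le\sqrt{n-k}\cdot\lambda_1.$$
   Context: $\mathcal{S}^n_+$ denotes the cone of $n\times n$ real symmetric positive semidefinite (PSD) matrices. For integers $2\le k\le n$, the $k$-PSD closure $\mathcal{S}^{n,k}$ is the set of all $n\times n$ real symmetric matrices all of whose $k\times k$ principal submatrices are PSD. $\mathrm{dist}_F(M,\mathcal{S}^n_+)=\inf_{N\in\mathcal{S}^n_+}\|M-N\|_F$ with $\|\cdot\|_F$ the Frobenius norm. *)

(* Defs.v *)
From HB Require Import structures.
From mathcomp Require Import all_boot all_order all_algebra.
From mathcomp Require Import all_classical all_reals.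
Set Implicit Arguments. Unset Strict Implicit. Unset Printing Implicit Defensive.
Import Order.TTheory GRing.Theory Num.Theory.
Local Open Scope ring_scope.
Local Open Scope classical_set_scope.

Definition symmetric_mx (R : realType) (n : nat) (A : 'M[R]_n) : Prop :=
  A^T = A.

Definition psd_mx (R : realType) (n : nat) (A : 'M[R]_n) : Prop :=
  symmetric_mx A /\ forall v : 'cV[R]_n, 0 <= (v^T *m A *m v) 0 0.

Definition principal_submx (R : realType) (n k : nat) (f : 'I_k -> 'I_n)
  (A : 'M[R]_n) : 'M[R]_k := mxsub f f A.

Definition kpsd_closure (R : realType) (n k : nat) (A : 'M[R]_n) : Prop :=
  symmetric_mx A /\
  forall f : 'I_k -> 'I_n, injective f -> psd_mx (principal_submx f A).

Definition frob_norm (R : realType) (n : nat) (A : 'M[R]_n) : R :=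
  Num.sqrt (\sum_(i < n) \sum_(j < n) (A i j) ^+ 2).

Definition dist_psd (R : realType) (n : nat) (M : 'M[R]_n) : R :=
  inf [set frob_norm (M - N) | N in [set N : 'M[R]_n | psd_mx N]].

(* Main.v *)
Require Import Defs.
From HB Require Import structures.
From mathcomp Require Import all_boot all_order all_algebra.
From mathcomp Require Import all_classical all_reals.
From mathcomp Require Import ring zify complex.
Import Order.TTheory GRing.Theory Num.Theory.
Local Open Scope ring_scope.
Set Implicit Arguments. Unset Strict Implicit. Unset Printing Implicit Defensive.

Section Gen.
Local Open Scope sesquilinear_scope.

Variable C : numClosedFieldType.

Lemma spec_facts n (A : 'M[C]_n) : A \is a realmx -> A^T = A ->
  exists P : 'M[C]_n, exists d : 'rV[C]_n,
   [/\ P *m P^t* = 1%:M, d \is a realmx & A = P^t* *m diag_mx d *m P].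
Proof.
move=> Ar As.
have Ah : A \is hermsymmx.
  apply: realsym_hermsym => //; apply/is_hermitianmxP.
  by rewrite expr0 scale1r map_mx_id.
exists (spectralmx A), (spectral_diag A); split.
- exact/unitarymxP/spectral_unitarymx.
- exact: hermitian_spectral_diag_real.
- rewrite -invmx_unitary ?spectral_unitarymx //.
  exact/orthomx_spectralP/hermitian_normalmx.
Qed.

Lemma quad_diag n (w e : 'rV[C]_n) :
  (w *m diag_mx e *m w^t*) 0 0 = \sum_j w 0 j * e 0 j * (w 0 j)^*.
Proof.
rewrite mul_mx_diag !mxE; apply: eq_bigr => j _; rewrite !mxE.
by [].
Qed.

Lemma realmx_conjt m n (a : 'M[C]_(m, n)) : a \is a realmx -> a^t* = a^T.
Proof. by move=> ar; rewrite -map_trmx realmxC. Qed.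

Lemma diag_real_conjt n (e : 'rV[C]_n) : e \is a realmx ->
  (diag_mx e)^t* = diag_mx e.
Proof. by move=> er; rewrite tr_diag_mx map_diag_mx realmxC. Qed.

Lemma conj_sandwich n (P : 'M[C]_n) (e : 'rV[C]_n) : e \is a realmx ->
  (P^t* *m diag_mx e *m P)^t* = P^t* *m diag_mx e *m P.
Proof.
move=> er; rewrite !trmx_mul !map_mxM trmxCK diag_real_conjt //.
by rewrite mulmxA.
Qed.

Lemma frob_tr n (X : 'M[C]_n) :
  \sum_i \sum_j X i j * (X i j)^* = \tr (X *m X^t*).
Proof.
rewrite /mxtrace; apply: eq_bigr => i _; rewrite mxE.
by apply: eq_bigr => j _; rewrite !mxE.
Qed.

Lemma Re_quad n (a : 'rV[C]_n) (X : 'M[C]_n) : a \is a realmx ->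
  (a *m (\matrix_(i, j) 'Re (X i j)) *m a^T) 0 0 = 'Re ((a *m X *m a^T) 0 0).
Proof.
move=> ar; rewrite !mxE raddf_sum; apply: eq_bigr => j _.
rewrite !mxE /= ReMr; last exact: (mxOverP ar).
congr (_ * _); rewrite raddf_sum; apply: eq_bigr => i _.
by rewrite !mxE /= ReMl //; exact: (mxOverP ar).
Qed.


Section Main.
Variables (n k : nat) (A P : 'M[C]_n) (d : 'rV[C]_n).
Hypotheses (HP : P *m P^t* = 1%:M) (Hd : d \is a realmx)
  (HA : A = P^t* *m diag_mx d *m P).

Lemma HP' : P^t* *m P = 1%:M.
Proof. exact: mulmx1C. Qed.

Lemma PA : P *m A = diag_mx d *m P.
Proof. by rewrite HA !mulmxA HP mul1mx. Qed.

Lemma eig_d l : eigenvalue A (d 0 l).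
Proof.
apply/eigenvalueP; exists (row l P).
  rewrite -row_mul PA mul_diag_mx; apply/rowP => j; by rewrite !mxE.
apply/eqP => h; have := congr1 (row l) HP; rewrite row_mul h mul0mx row1.
move/rowP/(_ l); rewrite !mxE eqxx /= => /esym /eqP; by rewrite pnatr_eq0 eqxx.
Qed.

Hypotheses (As : A^T = A) (Hk : (k <= n)%N)
  (Hpsd : forall a : 'rV[C]_n, a \is a realmx ->
     (forall j : 'I_n, (k <= j)%N -> a 0 j = 0) -> 0 <= (a *m A *m a^T) 0 0).

Lemma quad_nonneg (v : 'rV[C]_n) :
  (forall j : 'I_n, (k <= j)%N -> v 0 j = 0) -> 0 <= (v *m A *m v^t*) 0 0.
Proof.
move=> vs.
pose a := \matrix_(i, j) 'Re (v i j); pose b := \matrix_(i, j) 'Im (v i j).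
have ar : a \is a realmx by apply/mxOverP => i j; rewrite mxE Creal_Re.
have br : b \is a realmx by apply/mxOverP => i j; rewrite mxE Creal_Im.
have ve : v = a + 'i *: b.
  by apply/matrixP => i j; rewrite !mxE; exact: Crect.
have vt : v^t* = a^T - 'i *: b^T.
  apply/matrixP => i j; by rewrite ve !mxE conjC_rect ?Creal_Re ?Creal_Im.
have Hsym : (b *m A *m a^T) 0 0 = (a *m A *m b^T) 0 0.
  have -> : (a *m A *m b^T) = (b *m A *m a^T)^T by rewrite !trmx_mul trmxK As mulmxA.
  by rewrite [RHS]mxE.
have -> : (v *m A *m v^t*) 0 0 =
   (a *m A *m a^T) 0 0 + (b *m A *m b^T) 0 0.
  rewrite vt {1}ve !(mulmxDl, mulmxDr, mulmxBr) !mulmxN -!scalemxAl -!scalemxAr.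
  move: Hsym; rewrite !mxE => ->.
  rewrite mulrA -expr2 sqrCi; ring.
apply: addr_ge0; apply: Hpsd => // j hj; rewrite mxE vs // ?raddf0 //.
Qed.

Lemma count_neg : (#|[set l : 'I_n | (d 0 l < 0)%R]| <= n - k)%N.
Proof.
set S := [set l : 'I_n | (d 0 l < 0)%R].
rewrite leqNgt; apply/negP => Hlt.
pose f : 'I_#|S| -> 'I_n := enum_val.
pose U := rowsub f P.
have HU : U *m U^t* = 1%:M.
  apply/matrixP => i j.
  have := congr1 (fun M : 'M[C]_n => M (f i) (f j)) HP.
  rewrite !mxE (inj_eq enum_val_inj) => <-.
  by apply: eq_bigr => l _; rewrite !mxE.
have rU : \rank U = #|S| by apply: mxrank_unitary; apply/unitarymxP.
pose E : 'M[C]_n := pid_mx k.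
have rE : \rank E = k by rewrite rank_pid_mx.
have hsc := mxrank_sum_cap U E.
have hle := rank_leq_col (U + E)%MS.
have : (U :&: E)%MS != 0.
  rewrite -mxrank_eq0; apply/eqP => h0; move: hsc; rewrite h0 addn0 rU rE => hsc.
  lia.
case/rowV0Pn => v vsub vnz.
have vU : (v <= U)%MS := submx_trans vsub (capmxSl _ _).
have vE : (v <= E)%MS := submx_trans vsub (capmxSr _ _).
have vs : forall j : 'I_n, (k <= j)%N -> v 0 j = 0.
  move=> j hj; case/submxP: vE => c ->; rewrite mxE big1 // => i _; rewrite mxE.
  case: (i =P j :> nat) => [->|_] /=; last by rewrite mulr0.
  by rewrite ltnNge hj /= mulr0.
have := quad_nonneg vs.
set c := v *m P^t*.
have vdef : v = c *m P by rewrite /c -mulmxA HP' mulmx1.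
have csupp : forall j, j \notin S -> c 0 j = 0.
  move=> j hj; case/submxP: vU => c0 vc0.
  rewrite /c vc0 /U -mulmxA mul_rowsub_mx HP mxE big1 // => i _.
  rewrite !mxE; case: eqP; last by rewrite mulr0.
  by move=> eij; move: hj; rewrite -eij /f enum_valP.
have cnz : c != 0.
  by apply: contraNneq vnz => c0; rewrite vdef c0 mul0mx.
have /existsP [j0 hj0] : [exists j, c 0 j != 0].
  apply: contraNT cnz => /existsPn h; apply/eqP/rowP => j.
  by move: (h j); rewrite negbK => /eqP ->; rewrite mxE.
have j0S : j0 \in S by apply: contraNT hj0 => /csupp ->.
have HPX : forall m (X : 'M[C]_(n, m)), P *m (P^t* *m X) = X.
  by move=> m X; rewrite mulmxA HP mul1mx.
have -> : v *m A *m v^t* = c *m diag_mx d *m c^t*.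
  rewrite vdef HA trmx_mul map_mxM -!mulmxA !HPX.
  by rewrite !mulmxA.
rewrite quad_diag (bigD1 j0) //=.
have dr : forall j, d 0 j \is Num.real by move=> j; exact: (mxOverP Hd).
have t0 : c 0 j0 * d 0 j0 * (c 0 j0)^* < 0.
  rewrite mulrAC pmulr_rlt0 ?mul_conjC_gt0 //.
  by move: j0S; rewrite inE.
have t1 : \sum_(i < n | i != j0) c 0 i * d 0 i * (c 0 i)^* <= 0.
  apply: sumr_le0 => i _.
  have [iS|iS] := boolP (i \in S).
    rewrite mulrAC mulr_ge0_le0 ?mul_conjC_ge0 //.
    by move: iS; rewrite inE => /ltW.
  by rewrite csupp // !mul0r.
have := ltr_leD t0 t1; rewrite addr0 => h1 h2.
by have := lt_le_trans h1 h2; rewrite ltxx.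
Qed.

Hypothesis Ar : A \is a realmx.

Lemma Re_herm (X : 'M[C]_n) : X^t* = X ->
  (\matrix_(i, j) 'Re (X i j))^T = \matrix_(i, j) 'Re (X i j).
Proof. by move=> h; apply/matrixP => i j; rewrite -{1}h !mxE Re_conj. Qed.

Lemma main_PD (lam : C) : 0 <= lam -> (forall l, - lam <= d 0 l) ->
  exists B : 'M[C]_n, [/\ B \is a realmx, B^T = B,
     forall a : 'rV[C]_n, a \is a realmx -> 0 <= (a *m B *m a^T) 0 0 &
     \sum_i \sum_j ((A - B) i j) ^+ 2 <= (n - k)%:R * lam ^+ 2].
Proof.
move=> lam0 Hl.
have dr : forall j, d 0 j \is Num.real by move=> j; exact: (mxOverP Hd).
pose e := \row_j (if d 0 j < 0 then 0 else d 0 j).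
pose g := \row_j (if d 0 j < 0 then d 0 j else 0).
have er : e \is a realmx.
  by apply/mxOverP => i j; rewrite !mxE; case: ifP => _; [exact: real0| exact: dr].
have gr : g \is a realmx.
  by apply/mxOverP => i j; rewrite !mxE; case: ifP => _; [exact: dr| exact: real0].
have e0 : forall j, 0 <= e 0 j.
  by move=> j; rewrite mxE; case: ifPn => // h; rewrite real_leNgt ?real0 ?dr.
pose NC := P^t* *m diag_mx e *m P.
pose B := \matrix_(i, j) 'Re (NC i j).
have HPX : forall m (X : 'M[C]_(n, m)), P *m (P^t* *m X) = X.
  by move=> m X; rewrite mulmxA HP mul1mx.
exists B; split.
- by apply/mxOverP => i j; rewrite mxE Creal_Re.
- by apply: Re_herm; exact: conj_sandwich.
- move=> a ar; rewrite Re_quad //.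
  have -> : a *m NC *m a^T = (a *m P^t*) *m diag_mx e *m (a *m P^t*)^t*.
    by rewrite /NC trmx_mul map_mxM trmxCK (realmx_conjt ar) !mulmxA.
  rewrite quad_diag.
  have h : 0 <= \sum_j (a *m P^t*) 0 j * e 0 j * ((a *m P^t*) 0 j)^*.
    by apply: sumr_ge0 => j _; rewrite mulrAC mulr_ge0 ?mul_conjC_ge0.
  by have /Creal_ReP -> := ger0_real h.
- pose X := P^t* *m diag_mx g *m P.
  have dge : d = e + g.
    by apply/rowP => j; rewrite !mxE; case: ifP => _; rewrite ?addr0 ?add0r.
  have XA : A - NC = X.
    by rewrite /X /NC HA dge raddfD /= mulmxDr mulmxDl addrC addKr.
  have AmB : forall i j, (A - B) i j = 'Re (X i j).
    move=> i j; rewrite -XA !mxE raddfB /=.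
    by rewrite (Creal_ReP _ (mxOverP Ar i j)).
  apply: (@le_trans _ _ (\sum_i \sum_j X i j * (X i j)^*)).
    apply: ler_sum => i _; apply: ler_sum => j _; rewrite AmB -normCK normC2_Re_Im.
    by rewrite lerDl -real_normK ?Creal_Im // exprn_ge0 // normr_ge0.
  rewrite frob_tr conj_sandwich // /X -!mulmxA !HPX mxtrace_mulC -!mulmxA HP mulmx1.
  rewrite mulmx_diag mxtrace_diag.
  set S := [set l : 'I_n | (d 0 l < 0)%R].
  have -> : \sum_j (\row_j (g 0 j * g 0 j)) 0 j = \sum_(j in S) d 0 j * d 0 j.
    rewrite [RHS]big_mkcond /=; apply: eq_bigr => j _; rewrite !mxE inE.
    by case: ifP => _; rewrite ?mul0r.
  apply: (@le_trans _ _ (\sum_(j in S) lam ^+ 2)).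
    apply: ler_sum => j; rewrite inE => hj.
    have hj' : 0 <= - d 0 j by rewrite oppr_ge0 ltW.
    by rewrite -mulrNN expr2 ler_pM // lerNl.
  rewrite sumr_const -[_ *+ #|S|]mulr_natl ler_wpM2r ?exprn_ge0 // ler_nat.
  exact: count_neg.
Qed.

End Main.
Lemma mainC n k (A : 'M[C]_n) (lam : C) :
  A \is a realmx -> A^T = A -> (k <= n)%N -> 0 <= lam ->
  (forall a : 'rV[C]_n, a \is a realmx ->
     (forall j : 'I_n, (k <= j)%N -> a 0 j = 0) -> 0 <= (a *m A *m a^T) 0 0) ->
  (forall x, x \is Num.real -> eigenvalue A x -> - lam <= x) ->
  exists B : 'M[C]_n, [/\ B \is a realmx, B^T = B,
     forall a : 'rV[C]_n, a \is a realmx -> 0 <= (a *m B *m a^T) 0 0 &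
     \sum_i \sum_j ((A - B) i j) ^+ 2 <= (n - k)%:R * lam ^+ 2].
Proof.
move=> Ar As Hk lam0 Hpsd Heig.
have [P [d [HP Hd HA]]] := spec_facts Ar As.
apply: (main_PD HP Hd HA As Hk Hpsd Ar lam0) => l.
by apply: Heig; [exact: (mxOverP Hd) | exact: (eig_d HP HA)].
Qed.

End Gen.

Section RealPart.
Variable R : realType.
Local Notation f := (real_complex R).

Lemma fR (x : R) : f x \is Num.real.
Proof. by rewrite complex_real. Qed.

Lemma mx_realC m n (a : 'M[R[i]]_(m, n)) : a \is a realmx ->
  a = map_mx f (map_mx (@complex.Re R) a).
Proof.
by move=> ar; apply/matrixP => i j; rewrite !mxE RRe_real //; exact: (mxOverP ar).
Qed.

Lemma sum_widen n k (Hk : (k <= n)%N) (F : 'I_n -> R) :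
  (forall j : 'I_n, (k <= j)%N -> F j = 0) ->
  \sum_(j < n) F j = \sum_(j < k) F (widen_ord Hk j).
Proof.
move=> HF; rewrite (bigID (fun j : 'I_n => (j < k)%N)) /=.
rewrite [X in _ + X]big1 ?addr0; last by move=> j; rewrite -leqNgt; exact: HF.
by rewrite -(big_ord_narrow_cond (P := xpredT)).
Qed.

Lemma kpsd_quad n k (M : 'M[R]_n) (Hk : (k <= n)%N) :
  kpsd_closure k M -> forall a : 'rV[R]_n,
  (forall j : 'I_n, (k <= j)%N -> a 0 j = 0) -> 0 <= (a *m M *m a^T) 0 0.
Proof.
move=> [_ Hp] a ha.
have ginj : injective (widen_ord Hk) by move=> i j [] /val_inj.
have [_ ] := Hp _ ginj.
move=> /(_ (\col_i a 0 (widen_ord Hk i))).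
suff -> : (a *m M *m a^T) 0 0 =
  ((\col_i a 0 (widen_ord Hk i))^T *m principal_submx (widen_ord Hk) M *m
    (\col_i a 0 (widen_ord Hk i))) 0 0 by exact: id.
rewrite !mxE (sum_widen Hk); last by move=> j hj; rewrite !mxE ha // mulr0.
apply: eq_bigr => j _; rewrite !mxE; congr (_ * _).
rewrite (sum_widen Hk); last by move=> i hi; rewrite ha // mul0r.
by apply: eq_bigr => i _; rewrite !mxE.
Qed.

End RealPart.

Theorem proposition3 (R : realType) (n k : nat) (M : 'M[R]_n) (lambda1 : R) :
  (2 <= k)%N -> (k <= n)%N ->
  kpsd_closure k M ->
  0 < lambda1 ->
  eigenvalue M (- lambda1) ->
  (forall a : R, eigenvalue M a -> - lambda1 <= a) ->
  dist_psd M <= Num.sqrt ((n - k)%:R) * lambda1.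
Proof.
move=> _ Hk Hkp lam0 _ Heig.
pose f := real_complex R.
pose A := map_mx f M.
have Ar : A \is a realmx by apply/mxOverP => i j; rewrite mxE fR.
have As : A^T = A by rewrite /A map_trmx; case: Hkp => -> _.
have flam0 : 0 <= f lambda1 by rewrite ler0c ltW.
have Hpsd : forall a : 'rV[R[i]]_n, a \is a realmx ->
     (forall j : 'I_n, (k <= j)%N -> a 0 j = 0) -> 0 <= (a *m A *m a^T) 0 0.
  move=> a ar ha; rewrite (mx_realC ar) map_trmx -!map_mxM mxE ler0c.
  apply: (kpsd_quad Hk Hkp) => j hj; by rewrite mxE ha.
have HeigC : forall x, x \is Num.real -> eigenvalue A x -> - f lambda1 <= x.
  move=> x xr; rewrite -(RRe_real xr) -rmorphN lecR.
  rewrite eigenvalue_root_char /A -map_char_poly fmorph_root -eigenvalue_root_char.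
  exact: Heig.
have [B [Br BT Bpsd HF]] := mainC Ar As Hk flam0 Hpsd HeigC.
pose B' := map_mx (@complex.Re R) B.
have BB : B = map_mx f B' := mx_realC Br.
have B'psd : psd_mx B'.
  split.
    apply/matrixP => i j; have := congr1 (fun X : 'M__ => X i j) BT.
    by rewrite /B' !mxE => ->.
  move=> v; have := Bpsd (map_mx f v^T).
  rewrite BB map_trmx trmxK -!map_mxM mxE ler0c; apply.
  by apply/mxOverP => i j; rewrite mxE fR.
have HFR : \sum_i \sum_j ((M - B') i j) ^+ 2 <= (n - k)%:R * lambda1 ^+ 2.
  rewrite -lecR; move: HF; rewrite /A BB -map_mxB.
  rewrite rmorphM rmorph_nat rmorphXn => H.
  apply: (le_trans _ (le_trans H _)); last exact: lexx.
  rewrite rmorph_sum; apply: ler_sum => i _; rewrite rmorph_sum; apply: ler_sum => j _.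
  by rewrite !mxE rmorphXn.
have Hfrob : frob_norm (M - B') <= Num.sqrt ((n - k)%:R) * lambda1.
  rewrite /frob_norm -[lambda1 in X in _ <= X](ger0_norm (ltW lam0)).
  by rewrite -sqrtr_sqr -sqrtrM ?ler0n // ler_wsqrtr.
apply: le_trans Hfrob; apply: ge_inf; last by exists B'.
exists 0 => _ [N _ <-]; exact: sqrtr_ge0.
Qed.
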